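(* Let $f\colon M\to\mathbb R^3$ be a constant mean curvature surface ($H=1$) with Gauss map $N$ and coordinate frame $F$, in a conformal coordinate $z$ with induced metric $e^u|dz|^2$ and $Q=\langle f_{zz},N\rangle$. Let $F_\lambda\colon\tilde M\to\mathrm{Gl}(2,\mathbb C)$, $\lambda\in\mathbb C_*$, be an extended frame of $f$, i.e. a solution of \[F_\lambda^{-1}(F_\lambda)_z=\begin{pmatrix}-\frac{u_z}4 & Qe^{-u/2}\\ -\frac\lambda2 e^{u/2} & \frac{u_z}4\end{pmatrix},\qquad F_\lambda^{-1}(F_\lambda)_{\bar z}=\begin{pmatrix}\frac{u_{\bar z}}4 & \frac{\lambda^{-1}}2e^{u/2}\\ -\bar Qe^{-u/2} & -\frac{u_{\bar z}}4\end{pmatrix}\] with $F_{\lambda=1}=F$. Then the associated family of flat connections of $N$ is \[d_\lambda=F\cdot d^{F_\lambda}=F\circ\big(d+F_\lambda^{-1}dF_\lambda\big)\circ F^{-1}.\]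
   Context: Identify $\mathbb R^4=\mathbb H$, $\mathbb R^3=\mathrm{Im}\,\mathbb H$, $S^2=\{n\in\mathrm{Im}\,\mathbb H:n^2=-1\}$; identify $\mathbb H$ with matrices via $a_0+ja_1\mapsto\begin{pmatrix}a_0&-\bar a_1\\ a_1&\bar a_0\end{pmatrix}$ ($a_0,a_1\in\mathbb C$), which is left multiplication on $\mathbb C^2=(\mathbb H,I)$, $I$ = right multiplication by $i$, with basis $1,j$; then $\langle v,w\rangle=-\frac12\mathrm{tr}(vw)$ on $\mathbb R^3$. For a conformal immersion $f$ with conformal coordinate $z=x+iy$ and metric $e^u$, the coordinate frame is the (up to sign unique) $F\colon\tilde M\to SU(2)$ with $e^{-u/2}f_x=-iF\sigma_1F^{-1}$, $e^{-u/2}f_y=-iF\sigma_2F^{-1}$, $N=-iF\sigma_3F^{-1}$ ($\sigma_l$ the Pauli matrices), where the Gauss map satisfies $*df=N\,df=-df\,N$ with $*\omega(X)=\omega(J_MX)$. Mean curvature normalized $H=1$, so $(dN)'=\frac12(dN-N*dN)=-df$. $\underline{\mathbb H}=M\times\mathbb H$ has trivial connection $d$; $J$ is left multiplication by $N$, $A=\frac14(J\,dJ+*dJ)$, $A^{(1,0)}=\frac12(A-I*A)$, $A^{(0,1)}=\frac12(A+I*A)$; the associated family is $d_\lambda=d+(\lambda-1)A^{(1,0)}+(\lambda^{-1}-1)A^{(0,1)}$, $\lambda\in\mathbb C_*$. *)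

(* Defs.v *)
From Stdlib Require Import Reals.
From Coquelicot Require Import Coquelicot.
Open Scope R_scope.

Definition Ci : C := (0, 1).

(** 2x2 complex matrices (quaternions act on C^2 = (H, I) with basis 1, j
    by left multiplication; I = right multiplication by i = scalar i). *)
Record M2 := mkM2 { a11 : C; a12 : C; a21 : C; a22 : C }.
Definition V2 := (C * C)%type.

Definition M2add (A B : M2) : M2 :=
  mkM2 (Cplus (a11 A) (a11 B)) (Cplus (a12 A) (a12 B))
       (Cplus (a21 A) (a21 B)) (Cplus (a22 A) (a22 B)).
Definition M2scal (c : C) (A : M2) : M2 :=
  mkM2 (Cmult c (a11 A)) (Cmult c (a12 A)) (Cmult c (a21 A)) (Cmult c (a22 A)).
Definition M2opp (A : M2) : M2 := M2scal (RtoC (-1)) A.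
Definition M2sub (A B : M2) : M2 := M2add A (M2opp B).
Definition M2mul (A B : M2) : M2 :=
  mkM2 (Cplus (Cmult (a11 A) (a11 B)) (Cmult (a12 A) (a21 B)))
       (Cplus (Cmult (a11 A) (a12 B)) (Cmult (a12 A) (a22 B)))
       (Cplus (Cmult (a21 A) (a11 B)) (Cmult (a22 A) (a21 B)))
       (Cplus (Cmult (a21 A) (a12 B)) (Cmult (a22 A) (a22 B))).
Definition M2det (A : M2) : C :=
  Cminus (Cmult (a11 A) (a22 A)) (Cmult (a12 A) (a21 A)).
Definition M2tr (A : M2) : C := Cplus (a11 A) (a22 A).
(** inverse via the adjugate (meaningful when det <> 0) *)
Definition M2inv (A : M2) : M2 :=
  M2scal (Cinv (M2det A))
    (mkM2 (a22 A) (Copp (a12 A)) (Copp (a21 A)) (a11 A)).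
Definition M2star (A : M2) : M2 :=
  mkM2 (Cconj (a11 A)) (Cconj (a21 A)) (Cconj (a12 A)) (Cconj (a22 A)).
Definition M2one : M2 := mkM2 (RtoC 1) (RtoC 0) (RtoC 0) (RtoC 1).
Definition M2app (A : M2) (v : V2) : V2 :=
  (Cplus (Cmult (a11 A) (fst v)) (Cmult (a12 A) (snd v)),
   Cplus (Cmult (a21 A) (fst v)) (Cmult (a22 A) (snd v))).
Definition V2add (v w : V2) : V2 := (Cplus (fst v) (fst w), Cplus (snd v) (snd w)).

Definition sigma1 : M2 := mkM2 (RtoC 0) (RtoC 1) (RtoC 1) (RtoC 0).
Definition sigma2 : M2 := mkM2 (RtoC 0) (Copp Ci) Ci (RtoC 0).
Definition sigma3 : M2 := mkM2 (RtoC 1) (RtoC 0) (RtoC 0) (RtoC (-1)).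

(** The quaternion a0 + j a1 as the matrix [[a0, -conj a1],[a1, conj a0]];
    Im H = those with Re a0 = 0. *)
Definition quat_mx (a0 a1 : C) : M2 := mkM2 a0 (Copp (Cconj a1)) a1 (Cconj a0).
Definition isImH (A : M2) : Prop :=
  exists a0 a1 : C, A = quat_mx a0 a1 /\ Re a0 = 0.
Definition isSU2 (A : M2) : Prop :=
  M2mul A (M2star A) = M2one /\ M2det A = RtoC 1.

(** Euclidean inner product on Im H, <v,w> = -1/2 tr(vw), extended complex
    bilinearly. *)
Definition ip (v w : M2) : C := Cmult (RtoC (-1/2)) (M2tr (M2mul v w)).

Definition exC (g : R -> C) (t : R) : Prop :=
  ex_derive (fun s => fst (g s)) t /\ ex_derive (fun s => snd (g s)) t.
Definition derC (g : R -> C) (t : R) : C :=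
  (Derive (fun s => fst (g s)) t, Derive (fun s => snd (g s)) t).

(** Fields on the coordinate domain (x, y), z = x + i y. *)
Definition Field := R -> R -> M2.
Definition Sect := R -> R -> V2.

Definition dx (G : Field) : Field := fun x y =>
  mkM2 (derC (fun t => a11 (G t y)) x) (derC (fun t => a12 (G t y)) x)
       (derC (fun t => a21 (G t y)) x) (derC (fun t => a22 (G t y)) x).
Definition dy (G : Field) : Field := fun x y =>
  mkM2 (derC (fun t => a11 (G x t)) y) (derC (fun t => a12 (G x t)) y)
       (derC (fun t => a21 (G x t)) y) (derC (fun t => a22 (G x t)) y).
Definition ex_dx (G : Field) (x y : R) : Prop :=
  exC (fun t => a11 (G t y)) x /\ exC (fun t => a12 (G t y)) x /\
  exC (fun t => a21 (G t y)) x /\ exC (fun t => a22 (G t y)) x.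
Definition ex_dy (G : Field) (x y : R) : Prop :=
  exC (fun t => a11 (G x t)) y /\ exC (fun t => a12 (G x t)) y /\
  exC (fun t => a21 (G x t)) y /\ exC (fun t => a22 (G x t)) y.
Definition dz (G : Field) : Field := fun x y =>
  M2scal (RtoC (1/2)) (M2sub (dx G x y) (M2scal Ci (dy G x y))).
Definition dzb (G : Field) : Field := fun x y =>
  M2scal (RtoC (1/2)) (M2add (dx G x y) (M2scal Ci (dy G x y))).

Definition sdx (s : Sect) : Sect := fun x y =>
  (derC (fun t => fst (s t y)) x, derC (fun t => snd (s t y)) x).
Definition sdy (s : Sect) : Sect := fun x y =>
  (derC (fun t => fst (s x t)) y, derC (fun t => snd (s x t)) y).
Definition ex_sd (s : Sect) (x y : R) : Prop :=
  exC (fun t => fst (s t y)) x /\ exC (fun t => snd (s t y)) x /\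
  exC (fun t => fst (s x t)) y /\ exC (fun t => snd (s x t)) y.

Definition rdz (u : R -> R -> R) (x y : R) : C :=
  Cmult (RtoC (1/2)) (Cminus (RtoC (Derive (fun t => u t y) x))
                             (Cmult Ci (RtoC (Derive (fun t => u x t) y)))).
Definition rdzb (u : R -> R -> R) (x y : R) : C :=
  Cmult (RtoC (1/2)) (Cplus (RtoC (Derive (fun t => u t y) x))
                            (Cmult Ci (RtoC (Derive (fun t => u x t) y)))).

Definition open2 (U : R -> R -> Prop) : Prop :=
  forall x y, U x y -> exists eps : R, 0 < eps /\
    forall x' y', Rabs (x' - x) < eps -> Rabs (y' - y) < eps -> U x' y'.

(** Hopf differential coefficient Q = <f_zz, N>, with
    f_zz = 1/4 (f_xx - 2 i f_xy - f_yy). *)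
Definition hopfQ (f N : Field) (x y : R) : C :=
  ip (M2scal (RtoC (1/4))
        (M2sub (M2sub (dx (dx f) x y) (M2scal (RtoC 2) (M2scal Ci (dy (dx f) x y))))
               (dy (dy f) x y)))
     (N x y).

Definition meanH (f N : Field) (u : R -> R -> R) (x y : R) : C :=
  Cmult (RtoC (/2 * exp (- u x y)))
        (Cplus (ip (dx (dx f) x y) (N x y)) (ip (dy (dy f) x y) (N x y))).

Definition eu2 (u : R -> R -> R) (x y : R) : C := RtoC (exp (u x y / 2)).
Definition emu2 (u : R -> R -> R) (x y : R) : C := RtoC (exp (- u x y / 2)).

(** The right-hand sides of the extended frame equations. *)
Definition Ulam (lam : C) (u : R -> R -> R) (Q : R -> R -> C) (x y : R) : M2 :=
  mkM2 (Cmult (RtoC (-1/4)) (rdz u x y)) (Cmult (Q x y) (emu2 u x y))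
       (Cmult (Cmult (RtoC (-1/2)) lam) (eu2 u x y)) (Cmult (RtoC (1/4)) (rdz u x y)).
Definition Vlam (lam : C) (u : R -> R -> R) (Q : R -> R -> C) (x y : R) : M2 :=
  mkM2 (Cmult (RtoC (1/4)) (rdzb u x y)) (Cmult (Cmult (RtoC (1/2)) (Cinv lam)) (eu2 u x y))
       (Copp (Cmult (Cconj (Q x y)) (emu2 u x y))) (Cmult (RtoC (-1/4)) (rdzb u x y)).

(** Connection forms on the trivial bundle M x H, J = left mult by N.
    A = 1/4 (J dJ + *dJ), with *w(X) = w(J_M X), J_M d/dx = d/dy,
    J_M d/dy = - d/dx. *)
Definition Ax (N : Field) : Field := fun x y =>
  M2scal (RtoC (1/4)) (M2add (M2mul (N x y) (dx N x y)) (dy N x y)).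
Definition Ay (N : Field) : Field := fun x y =>
  M2scal (RtoC (1/4)) (M2sub (M2mul (N x y) (dy N x y)) (dx N x y)).
Definition A10x (N : Field) : Field := fun x y =>
  M2scal (RtoC (1/2)) (M2sub (Ax N x y) (M2scal Ci (Ay N x y))).
Definition A10y (N : Field) : Field := fun x y =>
  M2scal (RtoC (1/2)) (M2sub (Ay N x y) (M2scal Ci (M2opp (Ax N x y)))).
Definition A01x (N : Field) : Field := fun x y =>
  M2scal (RtoC (1/2)) (M2add (Ax N x y) (M2scal Ci (Ay N x y))).
Definition A01y (N : Field) : Field := fun x y =>
  M2scal (RtoC (1/2)) (M2add (Ay N x y) (M2scal Ci (M2opp (Ax N x y)))).

(** d_lambda = d + (lambda - 1) A^(1,0) + (lambda^-1 - 1) A^(0,1),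
    applied to a section s; returns (d_lambda s)(d/dx), (d_lambda s)(d/dy). *)
Definition dlam_conn (N : Field) (lam : C) (s : Sect) (x y : R) : V2 * V2 :=
  let cx := M2add (M2scal (Cminus lam (RtoC 1)) (A10x N x y))
                  (M2scal (Cminus (Cinv lam) (RtoC 1)) (A01x N x y)) in
  let cy := M2add (M2scal (Cminus lam (RtoC 1)) (A10y N x y))
                  (M2scal (Cminus (Cinv lam) (RtoC 1)) (A01y N x y)) in
  (V2add (sdx s x y) (M2app cx (s x y)), V2add (sdy s x y) (M2app cy (s x y))).

(** F . d^G := F o (d + G^-1 dG) o F^-1, applied to a section s. *)
Definition gauge_conn (F G : Field) (s : Sect) (x y : R) : V2 * V2 :=
  let t : Sect := fun x y => M2app (M2inv (F x y)) (s x y) in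
  (M2app (F x y) (V2add (sdx t x y) (M2app (M2mul (M2inv (G x y)) (dx G x y)) (t x y))),
   M2app (F x y) (V2add (sdy t x y) (M2app (M2mul (M2inv (G x y)) (dy G x y)) (t x y)))).

(* Main.v *)
From Pilot Require Import Defs.
From Stdlib Require Import Reals Lra.
From Coquelicot Require Import Coquelicot.
Open Scope R_scope.


Lemma isR_mult (f g : R -> R) x df dg : is_derive f x df -> is_derive g x dg ->
  is_derive (fun t => f t * g t) x (df * g x + f x * dg).
Proof. intros. apply (is_derive_mult f g); auto. intros; apply Rmult_comm. Qed.
Lemma isR_plus (f g : R -> R) x df dg : is_derive f x df -> is_derive g x dg ->
  is_derive (fun t => f t + g t) x (df + dg).
Proof. intros. apply (is_derive_plus f g); auto. Qed.
Lemma isR_minus (f g : R -> R) x df dg : is_derive f x df -> is_derive g x dg ->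
  is_derive (fun t => f t - g t) x (df - dg).
Proof. intros. apply (is_derive_minus f g); auto. Qed.
Lemma isR_opp (f : R -> R) x df : is_derive f x df ->
  is_derive (fun t => - f t) x (- df).
Proof. intros. apply (is_derive_opp f); auto. Qed.
Lemma isR_const (a : R) (x : R) : @is_derive R_AbsRing R_NormedModule (fun _ : R => a) x 0.
Proof. apply (is_derive_const a). Qed.
Lemma isR_eq (f : R -> R) (x l l' : R) : is_derive f x l -> l = l' -> is_derive f x l'.
Proof. intros; subst; auto. Qed.

Definition isC (g : R -> C) (t : R) (d : C) : Prop :=
  is_derive (fun s => fst (g s)) t (fst d) /\ is_derive (fun s => snd (g s)) t (snd d).

Lemma isC_mult g h t dg dh : isC g t dg -> isC h t dh ->
  isC (fun s => Cmult (g s) (h s)) t (Cplus (Cmult dg (h t)) (Cmult (g t) dh)).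
Proof.
  intros [H1 H2] [H3 H4]; split; simpl.
  - eapply isR_eq. apply isR_minus; apply isR_mult; eauto. cbv beta; ring.
  - eapply isR_eq. apply isR_plus; apply isR_mult; eauto. cbv beta; ring.
Qed.
Lemma isC_plus g h t dg dh : isC g t dg -> isC h t dh ->
  isC (fun s => Cplus (g s) (h s)) t (Cplus dg dh).
Proof. intros [H1 H2] [H3 H4]; split; simpl; apply isR_plus; auto. Qed.
Lemma isC_opp g t dg : isC g t dg -> isC (fun s => Copp (g s)) t (Copp dg).
Proof. intros [H1 H2]; split; simpl; apply isR_opp; auto. Qed.
Lemma isC_const (c : C) t : isC (fun _ => c) t (RtoC 0).
Proof. split; simpl; apply isR_const. Qed.
Lemma isC_eq g t d d' : isC g t d -> d = d' -> isC g t d'.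
Proof. intros; subst; auto. Qed.
Lemma isC_ext_loc g h t d : locally t (fun s => g s = h s) -> isC g t d -> isC h t d.
Proof.
  intros L [H1 H2]; split.
  - eapply is_derive_ext_loc; [|exact H1]. eapply filter_imp; [|exact L]. intros s E; simpl; now rewrite E.
  - eapply is_derive_ext_loc; [|exact H2]. eapply filter_imp; [|exact L]. intros s E; simpl; now rewrite E.
Qed.
Lemma isC_of_ex g t : exC g t -> isC g t (derC g t).
Proof. intros [H1 H2]; split; simpl; apply Derive_correct; auto. Qed.
Lemma derC_of_is g t d : isC g t d -> derC g t = d.
Proof.
  intros [H1 H2]; unfold derC. apply injective_projections; simpl; apply is_derive_unique; auto.
Qed.

Definition isM (G : R -> M2) (t : R) (D : M2) : Prop :=
  isC (fun s => a11 (G s)) t (a11 D) /\ isC (fun s => a12 (G s)) t (a12 D) /\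
  isC (fun s => a21 (G s)) t (a21 D) /\ isC (fun s => a22 (G s)) t (a22 D).
Definition isV (v : R -> V2) (t : R) (d : V2) : Prop :=
  isC (fun s => fst (v s)) t (fst d) /\ isC (fun s => snd (v s)) t (snd d).

Definition adj (A : M2) : M2 := mkM2 (a22 A) (Copp (a12 A)) (Copp (a21 A)) (a11 A).

Definition cj (F X : M2) : M2 := M2mul (M2mul F X) (adj F).

Ltac cq := apply injective_projections; unfold Coquelicot.Complex.Ci, Pilot.Defs.Ci, RtoC in *; simpl; field.
Ltac mdes := repeat match goal with
  | A : M2 |- _ => let a := fresh "a" in let b := fresh "b" in
       let c := fresh "c" in let d := fresh "d" in destruct A as [a b c d]
  | v : V2 |- _ => let a := fresh "v" in let b := fresh "w" in destruct v as [a b] end.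
Ltac meq := mdes;
  cbv beta iota delta [cj M2sub M2opp M2mul M2add M2scal M2app V2add adj sigma1 sigma2 sigma3
     M2one M2det a11 a12 a21 a22 fst snd];
  f_equal; apply injective_projections;
  cbv beta iota delta [fst snd Cmult Cplus Copp Cminus Cconj Coquelicot.Complex.Ci Pilot.Defs.Ci RtoC]; field.

Lemma isC_mult_eq g h t dg dh d : isC g t dg -> isC h t dh ->
  Cplus (Cmult dg (h t)) (Cmult (g t) dh) = d -> isC (fun s => Cmult (g s) (h s)) t d.
Proof. intros; subst; apply isC_mult; auto. Qed.

Lemma isM_mul G H t DG DH : isM G t DG -> isM H t DH ->
  isM (fun s => M2mul (G s) (H s)) t (M2add (M2mul DG (H t)) (M2mul (G t) DH)).
Proof.
  intros (g1&g2&g3&g4) (h1&h2&h3&h4).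
  refine (conj _ (conj _ (conj _ _))); simpl; (eapply isC_eq; [apply isC_plus; apply isC_mult; eauto|]);
  cbv beta; destruct (G t), (H t), DG, DH; simpl; cq.
Qed.
Lemma isM_add G H t DG DH : isM G t DG -> isM H t DH ->
  isM (fun s => M2add (G s) (H s)) t (M2add DG DH).
Proof. intros (g1&g2&g3&g4) (h1&h2&h3&h4). refine (conj _ (conj _ (conj _ _))); simpl; apply isC_plus; auto. Qed.
Lemma isM_scal c G t DG : isM G t DG -> isM (fun s => M2scal c (G s)) t (M2scal c DG).
Proof.
  intros (g1&g2&g3&g4).
  refine (conj _ (conj _ (conj _ _))); simpl; (eapply isC_eq; [apply isC_mult; [apply isC_const|eauto]|]); cq.
Qed.
Lemma isM_const A t : isM (fun _ => A) t (mkM2 (RtoC 0) (RtoC 0) (RtoC 0) (RtoC 0)).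
Proof. refine (conj _ (conj _ (conj _ _))); simpl; apply isC_const. Qed.
Lemma isM_adj G t D : isM G t D -> isM (fun s => adj (G s)) t (adj D).
Proof. intros (g1&g2&g3&g4). refine (conj _ (conj _ (conj _ _))); simpl; try apply isC_opp; auto. Qed.
Lemma isM_eq G t D D' : isM G t D -> D = D' -> isM G t D'.
Proof. intros; subst; auto. Qed.
Lemma isM_ext_loc G H t D : locally t (fun s => G s = H s) -> isM G t D -> isM H t D.
Proof.
  intros L (g1&g2&g3&g4).
  refine (conj _ (conj _ (conj _ _))); (eapply isC_ext_loc; [|eauto]); (eapply filter_imp; [|exact L]);
  intros s E; simpl; now rewrite E.
Qed.
Lemma isV_app G v t DG dv : isM G t DG -> isV v t dv ->
  isV (fun s => M2app (G s) (v s)) t (V2add (M2app DG (v t)) (M2app (G t) dv)).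
Proof.
  intros (g1&g2&g3&g4) (h1&h2).
  refine (conj _ _); simpl; (eapply isC_eq; [apply isC_plus; apply isC_mult; eauto|]);
  cbv beta; destruct (G t), (v t), DG, dv; simpl; cq.
Qed.
Lemma isV_ext_loc v w t d : locally t (fun s => v s = w s) -> isV v t d -> isV w t d.
Proof.
  intros L (g1&g2).
  refine (conj _ _); (eapply isC_ext_loc; [|eauto]); (eapply filter_imp; [|exact L]);
  intros s E; simpl; now rewrite E.
Qed.

Lemma isM_dx G x y : ex_dx G x y -> isM (fun t => G t y) x (dx G x y).
Proof. intros (h1&h2&h3&h4); refine (conj _ (conj _ (conj _ _))); simpl; apply isC_of_ex; auto. Qed.
Lemma isM_dy G x y : ex_dy G x y -> isM (fun t => G x t) y (dy G x y).
Proof. intros (h1&h2&h3&h4); refine (conj _ (conj _ (conj _ _))); simpl; apply isC_of_ex; auto. Qed.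
Lemma dx_of_is G x y D : isM (fun t => G t y) x D -> dx G x y = D.
Proof.
  intros (h1&h2&h3&h4); unfold dx.
  rewrite (derC_of_is _ _ _ h1), (derC_of_is _ _ _ h2), (derC_of_is _ _ _ h3), (derC_of_is _ _ _ h4).
  destruct D; reflexivity.
Qed.
Lemma dy_of_is G x y D : isM (fun t => G x t) y D -> dy G x y = D.
Proof.
  intros (h1&h2&h3&h4); unfold dy.
  rewrite (derC_of_is _ _ _ h1), (derC_of_is _ _ _ h2), (derC_of_is _ _ _ h3), (derC_of_is _ _ _ h4).
  destruct D; reflexivity.
Qed.
Lemma isV_sdx s x y : ex_sd s x y -> isV (fun t => s t y) x (sdx s x y).
Proof. intros (h1&h2&h3&h4); refine (conj _ _); simpl; apply isC_of_ex; auto. Qed.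
Lemma isV_sdy s x y : ex_sd s x y -> isV (fun t => s x t) y (sdy s x y).
Proof. intros (h1&h2&h3&h4); refine (conj _ _); simpl; apply isC_of_ex; auto. Qed.
Lemma sdx_of_is s x y d : isV (fun t => s t y) x d -> sdx s x y = d.
Proof.
  intros (h1&h2); unfold sdx.
  rewrite (derC_of_is _ _ _ h1), (derC_of_is _ _ _ h2). destruct d; reflexivity.
Qed.
Lemma sdy_of_is s x y d : isV (fun t => s x t) y d -> sdy s x y = d.
Proof.
  intros (h1&h2); unfold sdy.
  rewrite (derC_of_is _ _ _ h1), (derC_of_is _ _ _ h2). destruct d; reflexivity.
Qed.

Lemma Cinv1 : Cinv (RtoC 1) = RtoC 1.
Proof. unfold Cinv, RtoC; simpl; apply injective_projections; simpl; field. Qed.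

Lemma inv1 A : M2det A = RtoC 1 -> M2inv A = adj A.
Proof. intros H; unfold M2inv; rewrite H, Cinv1. meq. Qed.

Lemma det1_mul A B : M2det A = RtoC 1 -> M2mul A (M2mul (adj A) B) = B.
Proof.
  intros H. assert (E : M2mul A (M2mul (adj A) B) = M2scal (M2det A) B) by (unfold M2det; meq).
  rewrite E, H. meq.
Qed.
Lemma det1_id A : M2det A = RtoC 1 -> M2mul A (adj A) = M2one.
Proof.
  intros H. assert (E : M2mul A (adj A) = M2scal (M2det A) M2one) by (unfold M2det; meq).
  rewrite E, H. meq.
Qed.


Lemma cj_mul F X Y : M2det F = RtoC 1 -> M2mul (cj F X) (cj F Y) = cj F (M2mul X Y).
Proof.
  intros H. assert (E : M2mul (cj F X) (cj F Y) = M2scal (M2det F) (cj F (M2mul X Y)))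
    by (unfold cj, M2det; meq).
  rewrite E, H. meq.
Qed.

Definition Axf n nx ny := M2scal (RtoC (1/4)) (M2add (M2mul n nx) ny).
Definition Ayf n nx ny := M2scal (RtoC (1/4)) (M2sub (M2mul n ny) nx).
Definition cxf lam n nx ny :=
  M2add (M2scal (Cminus lam (RtoC 1)) (M2scal (RtoC (1/2)) (M2sub (Axf n nx ny) (M2scal Ci (Ayf n nx ny)))))
        (M2scal (Cminus (Cinv lam) (RtoC 1)) (M2scal (RtoC (1/2)) (M2add (Axf n nx ny) (M2scal Ci (Ayf n nx ny))))).
Definition cyf lam n nx ny :=
  M2add (M2scal (Cminus lam (RtoC 1)) (M2scal (RtoC (1/2)) (M2sub (Ayf n nx ny) (M2scal Ci (M2opp (Axf n nx ny))))))
        (M2scal (Cminus (Cinv lam) (RtoC 1)) (M2scal (RtoC (1/2)) (M2add (Ayf n nx ny) (M2scal Ci (M2opp (Axf n nx ny)))))).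

Lemma dlam_eq N lam s x y : dlam_conn N lam s x y =
  (V2add (sdx s x y) (M2app (cxf lam (N x y) (dx N x y) (dy N x y)) (s x y)),
   V2add (sdy s x y) (M2app (cyf lam (N x y) (dx N x y) (dy N x y)) (s x y))).
Proof. reflexivity. Qed.

Lemma cj_add F a b : M2add (cj F a) (cj F b) = cj F (M2add a b).
Proof. meq. Qed.
Lemma cj_sub F a b : M2sub (cj F a) (cj F b) = cj F (M2sub a b).
Proof. meq. Qed.
Lemma cj_scal F c a : M2scal c (cj F a) = cj F (M2scal c a).
Proof. meq. Qed.
Lemma cj_opp F a : M2opp (cj F a) = cj F (M2opp a).
Proof. meq. Qed.

Lemma cxf_cj F lam a b c : M2det F = RtoC 1 -> cxf lam (cj F a) (cj F b) (cj F c) = cj F (cxf lam a b c).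
Proof.
  intros H. unfold cxf, Axf, Ayf. rewrite !cj_mul by auto.
  repeat (rewrite ?cj_add, ?cj_sub, ?cj_scal, ?cj_opp). reflexivity.
Qed.
Lemma cyf_cj F lam a b c : M2det F = RtoC 1 -> cyf lam (cj F a) (cj F b) (cj F c) = cj F (cyf lam a b c).
Proof.
  intros H. unfold cyf, Axf, Ayf. rewrite !cj_mul by auto.
  repeat (rewrite ?cj_add, ?cj_sub, ?cj_scal, ?cj_opp). reflexivity.
Qed.


Definition Nh := M2scal (Copp Ci) sigma3.
Definition Nxh P := M2scal (Copp Ci) (M2add (M2mul P sigma3) (M2mul sigma3 (adj P))).
Definition Nder A D := M2scal (Copp Ci) (M2add (M2mul (M2mul D sigma3) (adj A)) (M2mul (M2mul A sigma3) (adj D))).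
Definition Nf A := M2scal (Copp Ci) (M2mul (M2mul A sigma3) (adj A)).

Lemma isM_Nf G t D : isM G t D -> isM (fun s => Nf (G s)) t (Nder (G t) D).
Proof.
  intros H. unfold Nf. eapply isM_eq.
  apply isM_scal. apply isM_mul. apply isM_mul. exact H. apply isM_const. apply isM_adj. exact H.
  unfold Nder. generalize (G t). intros. meq.
Qed.
Lemma Nf_cj A : Nf A = cj A Nh.
Proof. unfold Nf, Nh. meq. Qed.
Lemma Nder_cj A P : Nder A (M2mul A P) = cj A (Nxh P).
Proof. unfold Nder, Nxh. meq. Qed.

Lemma dx_dz G x y : dx G x y = M2add (dz G x y) (dzb G x y).
Proof. unfold dz, dzb. generalize (dx G x y) (dy G x y). intros. meq. Qed.
Lemma dy_dz G x y : dy G x y = M2scal Ci (M2sub (dz G x y) (dzb G x y)).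
Proof. unfold dz, dzb. generalize (dx G x y) (dy G x y). intros. meq. Qed.
Lemma mul_add_r A B C : M2mul A (M2add B C) = M2add (M2mul A B) (M2mul A C).
Proof. meq. Qed.
Lemma mul_scal_sub_r A c B C : M2mul A (M2scal c (M2sub B C)) = M2scal c (M2sub (M2mul A B) (M2mul A C)).
Proof. meq. Qed.
Lemma mul_add_l' F A B : M2add (M2mul F A) (M2mul F B) = M2mul F (M2add A B).
Proof. meq. Qed.
Lemma mul_scal_sub_l' F c A B : M2scal c (M2sub (M2mul F A) (M2mul F B)) = M2mul F (M2scal c (M2sub A B)).
Proof. meq. Qed.


Lemma final_eq F P L s sx : M2det F = RtoC 1 ->
  V2add sx (M2app (cj F (M2add (adj P) L)) s) =
  M2app F (V2add (V2add (M2app (adj (M2mul F P)) s) (M2app (adj F) sx)) (M2app L (M2app (adj F) s))).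
Proof.
  intros H.
  transitivity (V2add (M2app (M2mul F (adj F)) sx) (M2app (cj F (M2add (adj P) L)) s)).
  - rewrite det1_id by auto. clear H. meq.
  - clear H. meq.
Qed.



Lemma Nxh_tf d b c : Nxh (mkM2 d b c (Copp d)) =
  mkM2 (RtoC 0) (Cmult (Cmult (RtoC 2) Ci) b) (Copp (Cmult (Cmult (RtoC 2) Ci) c)) (RtoC 0).
Proof. unfold Nxh. meq. Qed.

Lemma cxf_off lam x1 x2 y1 y2 :
  cxf lam Nh (mkM2 (RtoC 0) x1 x2 (RtoC 0)) (mkM2 (RtoC 0) y1 y2 (RtoC 0)) =
  mkM2 (RtoC 0) (Cmult (Cmult (Cminus (Cinv lam) (RtoC 1)) (RtoC (1/4))) (Cminus y1 (Cmult Ci x1)))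
       (Cmult (Cmult (Cminus lam (RtoC 1)) (RtoC (1/4))) (Cplus (Cmult Ci x2) y2)) (RtoC 0).
Proof. unfold cxf, Axf, Ayf, Nh. generalize (Cinv lam); intros. meq. Qed.

Lemma cyf_off lam x1 x2 y1 y2 :
  cyf lam Nh (mkM2 (RtoC 0) x1 x2 (RtoC 0)) (mkM2 (RtoC 0) y1 y2 (RtoC 0)) =
  mkM2 (RtoC 0) (Copp (Cmult (Cmult (Cminus (Cinv lam) (RtoC 1)) (RtoC (1/4))) (Cplus x1 (Cmult Ci y1))))
       (Cmult (Cmult (Cminus lam (RtoC 1)) (RtoC (1/4))) (Cminus (Cmult Ci y2) x2)) (RtoC 0).
Proof. unfold cyf, Axf, Ayf, Nh. generalize (Cinv lam); intros. meq. Qed.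

Lemma P_form u Q x y : M2add (Ulam (RtoC 1) u Q x y) (Vlam (RtoC 1) u Q x y) =
  mkM2 (Cplus (Cmult (RtoC (-1/4)) (rdz u x y)) (Cmult (RtoC (1/4)) (rdzb u x y)))
       (Cplus (Cmult (Q x y) (emu2 u x y)) (Cmult (RtoC (1/2)) (eu2 u x y)))
       (Cplus (Cmult (RtoC (-1/2)) (eu2 u x y)) (Copp (Cmult (Cconj (Q x y)) (emu2 u x y))))
       (Copp (Cplus (Cmult (RtoC (-1/4)) (rdz u x y)) (Cmult (RtoC (1/4)) (rdzb u x y)))).
Proof.
  unfold Ulam, Vlam. rewrite Cinv1.
  generalize (rdz u x y) (rdzb u x y) (Q x y) (eu2 u x y) (emu2 u x y). intros. meq.
Qed.
Lemma P'_form u Q x y : M2scal Ci (M2sub (Ulam (RtoC 1) u Q x y) (Vlam (RtoC 1) u Q x y)) =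
  mkM2 (Cmult Ci (Cplus (Cmult (RtoC (-1/4)) (rdz u x y)) (Cmult (RtoC (-1/4)) (rdzb u x y))))
       (Cmult Ci (Cminus (Cmult (Q x y) (emu2 u x y)) (Cmult (RtoC (1/2)) (eu2 u x y))))
       (Cmult Ci (Cplus (Cmult (RtoC (-1/2)) (eu2 u x y)) (Cmult (Cconj (Q x y)) (emu2 u x y))))
       (Copp (Cmult Ci (Cplus (Cmult (RtoC (-1/4)) (rdz u x y)) (Cmult (RtoC (-1/4)) (rdzb u x y))))).
Proof.
  unfold Ulam, Vlam. rewrite Cinv1.
  generalize (rdz u x y) (rdzb u x y) (Q x y) (eu2 u x y) (emu2 u x y). intros. meq.
Qed.

Lemma Xx lam u Q x y :
  cxf lam Nh (Nxh (M2add (Ulam (RtoC 1) u Q x y) (Vlam (RtoC 1) u Q x y)))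
     (Nxh (M2scal Ci (M2sub (Ulam (RtoC 1) u Q x y) (Vlam (RtoC 1) u Q x y)))) =
  M2add (adj (M2add (Ulam (RtoC 1) u Q x y) (Vlam (RtoC 1) u Q x y)))
        (M2add (Ulam lam u Q x y) (Vlam lam u Q x y)).
Proof.
  rewrite P_form, P'_form, !Nxh_tf, cxf_off.
  unfold Ulam, Vlam.
  generalize (Cinv lam) (rdz u x y) (rdzb u x y) (Q x y) (eu2 u x y) (emu2 u x y).
  intros. meq.
Qed.
Lemma Xy lam u Q x y :
  cyf lam Nh (Nxh (M2add (Ulam (RtoC 1) u Q x y) (Vlam (RtoC 1) u Q x y)))
     (Nxh (M2scal Ci (M2sub (Ulam (RtoC 1) u Q x y) (Vlam (RtoC 1) u Q x y)))) =
  M2add (adj (M2scal Ci (M2sub (Ulam (RtoC 1) u Q x y) (Vlam (RtoC 1) u Q x y))))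
        (M2scal Ci (M2sub (Ulam lam u Q x y) (Vlam lam u Q x y))).
Proof.
  rewrite P_form, P'_form, !Nxh_tf, cyf_off.
  unfold Ulam, Vlam.
  generalize (Cinv lam) (rdz u x y) (rdzb u x y) (Q x y) (eu2 u x y) (emu2 u x y).
  intros. meq.
Qed.


Lemma locx (U : R -> R -> Prop) x y : open2 U -> U x y -> locally x (fun t => U t y).
Proof.
  intros HU H. destruct (HU x y H) as [eps [He Hx]]. exists (mkposreal eps He).
  intros t Ht. apply Hx. exact Ht. rewrite Rminus_diag, Rabs_R0; exact He.
Qed.
Lemma locy (U : R -> R -> Prop) x y : open2 U -> U x y -> locally y (fun t => U x t).
Proof.
  intros HU H. destruct (HU x y H) as [eps [He Hx]]. exists (mkposreal eps He).
  intros t Ht. apply Hx. rewrite Rminus_diag, Rabs_R0; exact He. exact Ht.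
Qed.

Lemma HNx_lem (U : R -> R -> Prop) (N F : Field) x y :
  open2 U -> U x y -> ex_dx F x y ->
  (forall x y, U x y -> M2det (F x y) = RtoC 1 /\
     N x y = M2scal (Copp Ci) (M2mul (M2mul (F x y) sigma3) (M2inv (F x y)))) ->
  dx N x y = Nder (F x y) (dx F x y).
Proof.
  intros HU Hxy HFx HF. apply dx_of_is.
  apply (isM_ext_loc (fun t => Nf (F t y))); [| apply (isM_Nf (fun t => F t y)); apply isM_dx; exact HFx].
  eapply filter_imp; [|exact (locx U x y HU Hxy)]. intros t Ht. cbv beta.
  destruct (HF t y Ht) as (Hd&E). rewrite E, (inv1 _ Hd). reflexivity.
Qed.
Lemma HNy_lem (U : R -> R -> Prop) (N F : Field) x y :
  open2 U -> U x y -> ex_dy F x y ->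
  (forall x y, U x y -> M2det (F x y) = RtoC 1 /\
     N x y = M2scal (Copp Ci) (M2mul (M2mul (F x y) sigma3) (M2inv (F x y)))) ->
  dy N x y = Nder (F x y) (dy F x y).
Proof.
  intros HU Hxy HFy HF. apply dy_of_is.
  apply (isM_ext_loc (fun t => Nf (F x t))); [| apply (isM_Nf (fun t => F x t)); apply isM_dy; exact HFy].
  eapply filter_imp; [|exact (locy U x y HU Hxy)]. intros t Ht. cbv beta.
  destruct (HF x t Ht) as (Hd&E). rewrite E, (inv1 _ Hd). reflexivity.
Qed.

Lemma Htx_lem (U : R -> R -> Prop) (F : Field) (s : Sect) x y :
  open2 U -> U x y -> ex_dx F x y -> ex_sd s x y ->
  (forall x y, U x y -> M2det (F x y) = RtoC 1) ->
  sdx (fun x0 y0 => M2app (M2inv (F x0 y0)) (s x0 y0)) x y =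
     V2add (M2app (adj (dx F x y)) (s x y)) (M2app (adj (F x y)) (sdx s x y)).
Proof.
  intros HU Hxy HFx Hs HF. apply sdx_of_is.
  apply (isV_ext_loc (fun t => M2app (adj (F t y)) (s t y)));
   [| apply (isV_app (fun t => adj (F t y)) (fun t => s t y));
      [apply (isM_adj (fun t => F t y)); apply isM_dx; exact HFx | apply isV_sdx; exact Hs]].
  eapply filter_imp; [|exact (locx U x y HU Hxy)]. intros t Ht. cbv beta.
  rewrite (inv1 _ (HF t y Ht)). reflexivity.
Qed.
Lemma Hty_lem (U : R -> R -> Prop) (F : Field) (s : Sect) x y :
  open2 U -> U x y -> ex_dy F x y -> ex_sd s x y ->
  (forall x y, U x y -> M2det (F x y) = RtoC 1) ->
  sdy (fun x0 y0 => M2app (M2inv (F x0 y0)) (s x0 y0)) x y =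
     V2add (M2app (adj (dy F x y)) (s x y)) (M2app (adj (F x y)) (sdy s x y)).
Proof.
  intros HU Hxy HFy Hs HF. apply sdy_of_is.
  apply (isV_ext_loc (fun t => M2app (adj (F x t)) (s x t)));
   [| apply (isV_app (fun t => adj (F x t)) (fun t => s x t));
      [apply (isM_adj (fun t => F x t)); apply isM_dy; exact HFy | apply isV_sdy; exact Hs]].
  eapply filter_imp; [|exact (locy U x y HU Hxy)]. intros t Ht. cbv beta.
  rewrite (inv1 _ (HF x t Ht)). reflexivity.
Qed.

Lemma Edx_lem (U : R -> R -> Prop) (G H : Field) x y :
  open2 U -> U x y -> ex_dx H x y -> (forall x y, U x y -> H x y = G x y) ->
  dx G x y = dx H x y.
Proof.
  intros HU Hxy HH E. apply dx_of_is. apply (isM_ext_loc (fun t => H t y)); [|apply isM_dx; exact HH].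
  eapply filter_imp; [|exact (locx U x y HU Hxy)]. intros t Ht. apply E; exact Ht.
Qed.
Lemma Edy_lem (U : R -> R -> Prop) (G H : Field) x y :
  open2 U -> U x y -> ex_dy H x y -> (forall x y, U x y -> H x y = G x y) ->
  dy G x y = dy H x y.
Proof.
  intros HU Hxy HH E. apply dy_of_is. apply (isM_ext_loc (fun t => H x t)); [|apply isM_dy; exact HH].
  eapply filter_imp; [|exact (locy U x y HU Hxy)]. intros t Ht. apply E; exact Ht.
Qed.

Theorem lemma4p4
  (U : R -> R -> Prop) (f N F : Field) (u : R -> R -> R) (Fl : C -> Field) :
  open2 U ->
  (forall x y, U x y ->
     ex_dx f x y /\ ex_dy f x y /\ ex_dx (dx f) x y /\ ex_dy (dx f) x y /\
     ex_dx (dy f) x y /\ ex_dy (dy f) x y /\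
     ex_derive (fun t => u t y) x /\ ex_derive (fun t => u x t) y /\
     ex_dx F x y /\ ex_dy F x y) ->
  (forall x y, U x y -> isImH (f x y)) ->
  (forall x y, U x y ->
     isSU2 (F x y) /\
     M2scal (emu2 u x y) (dx f x y) = M2scal (Copp Ci) (M2mul (M2mul (F x y) sigma1) (M2inv (F x y))) /\
     M2scal (emu2 u x y) (dy f x y) = M2scal (Copp Ci) (M2mul (M2mul (F x y) sigma2) (M2inv (F x y))) /\
     N x y = M2scal (Copp Ci) (M2mul (M2mul (F x y) sigma3) (M2inv (F x y)))) ->
  (forall x y, U x y -> meanH f N u x y = RtoC 1) ->
  (forall lam x y, lam <> RtoC 0 -> U x y ->
     M2det (Fl lam x y) <> RtoC 0 /\ ex_dx (Fl lam) x y /\ ex_dy (Fl lam) x y /\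
     M2mul (M2inv (Fl lam x y)) (dz (Fl lam) x y) = Ulam lam u (hopfQ f N) x y /\
     M2mul (M2inv (Fl lam x y)) (dzb (Fl lam) x y) = Vlam lam u (hopfQ f N) x y) ->
  (forall x y, U x y -> Fl (RtoC 1) x y = F x y) ->
  forall lam, lam <> RtoC 0 ->
  forall (s : Sect) x y, U x y -> ex_sd s x y ->
    dlam_conn N lam s x y = gauge_conn F (Fl lam) s x y.
Proof.
  intros HU Hreg HIm HF HH HFl HF1 lam Hlam s x y Hxy Hs.
  destruct (Hreg x y Hxy) as (_&_&_&_&_&_&_&_&HFx&HFy).
  destruct (HF x y Hxy) as ([_ Hdet] & _ & _ & HN).
  assert (HF' : forall x y, U x y -> M2det (F x y) = RtoC 1 /\
     N x y = M2scal (Copp Ci) (M2mul (M2mul (F x y) sigma3) (M2inv (F x y)))).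
  { intros x' y' H'. destruct (HF x' y' H') as ([_ D]&_&_&E). split; assumption. }
  assert (HD : forall x y, U x y -> M2det (F x y) = RtoC 1) by (intros x' y' H'; apply (HF' x' y' H')).
  pose proof (HNx_lem U N F x y HU Hxy HFx HF') as HNx.
  pose proof (HNy_lem U N F x y HU Hxy HFy HF') as HNy.
  pose proof (Htx_lem U F s x y HU Hxy HFx Hs HD) as Htx.
  pose proof (Hty_lem U F s x y HU Hxy HFy Hs HD) as Hty.
  destruct (HFl lam x y Hlam Hxy) as (_&_&_&HUl&HVl).
  assert (HLx : M2mul (M2inv (Fl lam x y)) (dx (Fl lam) x y) =
     M2add (Ulam lam u (hopfQ f N) x y) (Vlam lam u (hopfQ f N) x y)).
  { rewrite dx_dz, mul_add_r, HUl, HVl. reflexivity. }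
  assert (HLy : M2mul (M2inv (Fl lam x y)) (dy (Fl lam) x y) =
     M2scal Ci (M2sub (Ulam lam u (hopfQ f N) x y) (Vlam lam u (hopfQ f N) x y))).
  { rewrite dy_dz, mul_scal_sub_r, HUl, HVl. reflexivity. }
  assert (H10 : RtoC 1 <> RtoC 0).
  { intro E. unfold RtoC in E. injection E. lra. }
  destruct (HFl (RtoC 1) x y H10 Hxy) as (_&_&_&HU1&HV1).
  pose proof (Edx_lem U (Fl (RtoC 1)) F x y HU Hxy HFx (fun a b h => eq_sym (HF1 a b h))) as Edx.
  pose proof (Edy_lem U (Fl (RtoC 1)) F x y HU Hxy HFy (fun a b h => eq_sym (HF1 a b h))) as Edy.
  assert (Edz : dz (Fl (RtoC 1)) x y = dz F x y) by (unfold dz; rewrite Edx, Edy; reflexivity).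
  assert (Edzb : dzb (Fl (RtoC 1)) x y = dzb F x y) by (unfold dzb; rewrite Edx, Edy; reflexivity).
  rewrite (HF1 x y Hxy), Edz, (inv1 _ Hdet) in HU1.
  rewrite (HF1 x y Hxy), Edzb, (inv1 _ Hdet) in HV1.
  assert (EFx : dx F x y = M2mul (F x y)
     (M2add (Ulam (RtoC 1) u (hopfQ f N) x y) (Vlam (RtoC 1) u (hopfQ f N) x y))).
  { rewrite dx_dz, <- HU1, <- HV1, <- mul_add_r, (det1_mul _ _ Hdet). reflexivity. }
  assert (EFy : dy F x y = M2mul (F x y)
     (M2scal Ci (M2sub (Ulam (RtoC 1) u (hopfQ f N) x y) (Vlam (RtoC 1) u (hopfQ f N) x y)))).
  { rewrite dy_dz, <- HU1, <- HV1, <- mul_scal_sub_r, (det1_mul _ _ Hdet). reflexivity. }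
  assert (EN : N x y = cj (F x y) Nh).
  { rewrite HN, (inv1 _ Hdet). apply Nf_cj. }
  rewrite dlam_eq. unfold gauge_conn. cbv beta zeta.
  rewrite Htx, Hty, HLx, HLy, (inv1 _ Hdet).
  rewrite HNx, HNy, EFx, EFy, !Nder_cj, EN.
  rewrite (cxf_cj _ _ _ _ _ Hdet), (cyf_cj _ _ _ _ _ Hdet), Xx, Xy.
  apply (f_equal2 pair); apply (final_eq _ _ _ _ _ Hdet).
Qed.
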